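(* Let $C$ be a maximal independent set of the Kneser graph $\Gamma$ of flags of type $\{2,3\}$ of $\mathrm{PG}(6,q)$. (i) For every saturated solid $S$ and every flag $(E',S')\in C$ we have $E'\cap S\neq\emptyset$. (ii) If $S$ is a solid with $S\cap E'\neq\emptyset$ for all flags $(E',S')\in C$, then $S$ is saturated. (iii) If $S$ and $S'$ are saturated solids, then $\dim(S\cap S')\ge 1$. (iv) If $H$ is a hyperplane with $E\subseteq H$ for all flags $(E,S)\in C$, then every solid of $H$ is saturated.
   Context: Dimensions are projective (planes 2, solids 3, hyperplanes 5). A flag of type $\{2,3\}$ is a pair $(E,S)$ of a plane $E$ and a solid $S$ with $E\subseteq S$; in $\Gamma$ distinct flags $(E,S),(E',S')$ are adjacent iff $E\cap S'=\emptyset$ and $E'\cap S=\emptyset$. A solid $S$ is saturated (for $C$) if $(E,S)\in C$ for all planes $E$ of $S$. *)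

(* Defs.v *)
(* PG(6,q) is modelled as the lattice of subspaces of the
   7-dimensional row space 'rV[F]_7 over a finite field F (|F| = q).
   Projective dimension d  <->  vector-space dimension d+1. *)
From HB Require Import structures.
From mathcomp Require Import all_boot all_order all_algebra all_field.
Set Implicit Arguments. Unset Strict Implicit. Unset Printing Implicit Defensive.
Import GRing.Theory.
Local Open Scope ring_scope.

Definition PGvec (F : finFieldType) := 'rV[F]_7.

Section PG.
Variable F : finFieldType.
Local Notation sub := {vspace PGvec F}.

Definition is_plane (E : sub) : Prop := \dim E = 3%N.
Definition is_solid (S : sub) : Prop := \dim S = 4%N.
Definition is_hyperplane (H : sub) : Prop := \dim H = 6%N.

Definition is_flag (f : sub * sub) : Prop :=
  is_plane f.1 /\ is_solid f.2 /\ (f.1 <= f.2)%VS.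

(* projective subspaces are disjoint iff their vector intersection is 0 *)
Definition pdisjoint (U W : sub) : Prop := (U :&: W)%VS = 0%VS.

Definition adjacent (f g : sub * sub) : Prop :=
  f <> g /\ pdisjoint f.1 g.2 /\ pdisjoint g.1 f.2.

Definition independent (C : sub * sub -> Prop) : Prop :=
  (forall f, C f -> is_flag f) /\
  (forall f g, C f -> C g -> ~ adjacent f g).

Definition maximal_independent (C : sub * sub -> Prop) : Prop :=
  independent C /\
  (forall f, is_flag f -> independent (fun g => C g \/ g = f) -> C f).

Definition saturated (C : sub * sub -> Prop) (S : sub) : Prop :=
  forall E : sub, is_plane E -> (E <= S)%VS -> C (E, S).

End PG.

(* Main.v *)
Require Import Defs.
From HB Require Import structures.
From mathcomp Require Import all_boot all_order all_algebra all_field.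
From mathcomp Require Import zify.

Set Implicit Arguments. Unset Strict Implicit. Unset Printing Implicit Defensive.
Import GRing.Theory.

Section Aux.
Variable F : finFieldType.
Local Notation sub := {vspace PGvec F}.

Lemma sub_of_dim (W : sub) k : (k <= \dim W)%N ->
  exists X : sub, (X <= W)%VS /\ \dim X = k.
Proof.
elim: k => [|k IH] hk.
  by exists 0%VS; rewrite sub0v dimv0.
have [X [XW dX]] := IH (ltnW hk).
have : ~~ (W <= X)%VS.
  apply/negP => WX; have := dimvS WX; lia.
case/subvPn => w wW wX.
exists (X + <[w]>)%VS; split.
  by rewrite subv_add XW -memvE.
have XS : (X <= X + <[w]>)%VS by apply: addvSl.
have h1 := dimv_sum_cap X <[w]>.
have h2 : (\dim (X :&: <[w]>) <= \dim <[w]>)%N by apply: dimvS; apply: capvSr.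
have h3 : (\dim <[w]> <= 1)%N by rewrite dim_vline; case: (w != 0%R).
have h4 : \dim X != \dim (X + <[w]>).
  rewrite (dimv_leqif_sup XS).2 subv_add subvv /= -memvE.
  exact: wX.
have := dimvS XS; lia.
Qed.

Lemma cap0 (U V : sub) : (U <= V)%VS -> V = 0%VS -> U = 0%VS.
Proof. by move=> h e; apply/eqP; rewrite -subv0 -e. Qed.

Lemma disj_plane (S W : sub) : \dim S = 4%N -> (\dim (S :&: W) <= 1)%N ->
  exists E : sub, [/\ (E <= S)%VS, \dim E = 3%N & (E :&: W)%VS = 0%VS].
Proof.
move=> dS dI.
have h0 : ((S :\: W) :&: (S :&: W))%VS = 0%VS.
  apply: cap0 (capv_diff S W); apply: capvS; [exact: subvv | exact: capvSr].
have h1 := dimv_sum_cap (S :\: W) (S :&: W).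
rewrite addv_diff_cap h0 dimv0 in h1.
have [E [ES dE]] := @sub_of_dim (S :\: W) 3 ltac:(lia).
exists E; split => //.
  exact: subv_trans ES (diffvSl _ _).
apply: cap0 (capv_diff S W); apply: capvS => //; exact: subvv.
Qed.

Lemma dim_cap_ge (U V H : sub) : (U <= H)%VS -> (V <= H)%VS ->
  (\dim U + \dim V <= \dim H + \dim (U :&: V))%N.
Proof.
move=> UH VH; have := dimv_sum_cap U V.
have := dimvS (_ : (U + V <= H)%VS); rewrite subv_add UH VH => /(_ isT). lia.
Qed.

Lemma dimW (U : sub) : (\dim U <= 7)%N.
Proof. have := dimvS (subvf U); rewrite dimvf /dim /=. lia. Qed.

End Aux.

Theorem lemma6p3 (F : finFieldType) (C : {vspace PGvec F} * {vspace PGvec F} -> Prop) :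
  maximal_independent C ->
  (* (i) *)
  (forall S : {vspace PGvec F}, is_solid S -> saturated C S ->
     forall f, C f -> ~ pdisjoint f.1 S) /\
  (* (ii) *)
  (forall S : {vspace PGvec F}, is_solid S ->
     (forall f, C f -> ~ pdisjoint S f.1) -> saturated C S) /\
  (* (iii) projective dim of S :&: S' at least 1, i.e. vector dim >= 2 *)
  (forall S S' : {vspace PGvec F}, is_solid S -> is_solid S' ->
     saturated C S -> saturated C S' -> (2 <= \dim (S :&: S'))%N) /\
  (* (iv) *)
  (forall H : {vspace PGvec F}, is_hyperplane H ->
     (forall f, C f -> (f.1 <= H)%VS) ->
     forall S : {vspace PGvec F}, is_solid S -> (S <= H)%VS -> saturated C S).
Proof.
move=> [[Cflag Cnadj] Cmax].
have dimcap0 : forall U V : {vspace PGvec F}, (U :&: V)%VS = 0%VS -> \dim (U :&: V) = 0%N.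
  by move=> U V ->; rewrite dimv0.
have partii : forall S : {vspace PGvec F}, is_solid S ->
     (forall f, C f -> ~ pdisjoint S f.1) -> saturated C S.
  move=> S dS hS E dE ES; apply: Cmax.
    by rewrite /is_flag /=; split => //; split.
  split.
    by move=> g [/Cflag //|->]; rewrite /is_flag /=; split => //; split.
  move=> f g [Cf|->] [Cg|->].
  - exact: Cnadj.
  - by rewrite /adjacent => -[_ [h _]]; apply: (hS f Cf); rewrite /pdisjoint capvC.
  - by rewrite /adjacent => -[_ [_ h]]; apply: (hS g Cg); rewrite /pdisjoint capvC.
  - by rewrite /adjacent => -[].
split.
  move=> S dS sat [E' S'] Cf disj.
  have [/= dE' [dS' E'S']] := Cflag _ Cf.
  have hc : (((S :&: S') :&: E') = 0)%VS.
    apply: cap0 disj; rewrite capvC; apply: capvS; [exact: subvv|exact: capvSl].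
  have := dim_cap_ge (capvSr S S') E'S'.
  rewrite (dimcap0 _ _ hc) /is_plane /is_solid in dE' dS' * => h.
  have [E [ES dE EW]] := @disj_plane F S S' dS ltac:(lia).
  apply: (Cnadj (E, S) (E', S')) => //; first exact: sat.
  split; last by split.
  case=> e1 e2; subst E' S'.
  move: disj; rewrite /pdisjoint /= (capv_idPl ES) => e.
  by rewrite e dimv0 in dE.
split; first exact: partii.
split.
  move=> S S' dS dS' satS satS'.
  rewrite leqNgt; apply/negP => hlt.
  have [E [ES dE EW]] := @disj_plane F S S' dS ltac:(lia).
  have [E' [ES' dE' EW']] := @disj_plane F S' S dS' ltac:(rewrite capvC; lia).
  apply: (Cnadj (E, S) (E', S')); [exact: satS|exact: satS'|].
  split; last by split.
  case=> e1 e2; subst E' S'.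
  move: EW; rewrite (capv_idPl ES) => e.
  by rewrite e dimv0 in dE.
move=> H dH hC S dS SH; apply: partii => // [[E' S']] Cf /= disj.
have [/= dE' _] := Cflag _ Cf.
have := dim_cap_ge SH (hC (E', S') Cf : (E' <= H)%VS).
rewrite (dimcap0 _ _ disj) /is_plane /is_solid /is_hyperplane in dE' dS dH *.
rewrite dE' dS dH => h; lia.
Qed.
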